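(* Let $\mathcal{M}=\langle S,\to,L\rangle$ be a labeled transition system and let $B\subseteq S\times S$ be a reduced well-founded skipping relation (RWFSK) on $\mathcal{M}$. Then $B$ is a skipping simulation (SKS) on $\mathcal{M}$.
   Context: A labeled transition system is $\mathcal{M}=\langle S,\to,L\rangle$ where $S$ is a non-empty (possibly infinite) set of states, $\to\subseteq S\times S$ is left-total (every state has a successor), and $L$ is a function with domain $S$. A fullpath is an infinite sequence $\sigma$ of states with $\sigma(i)\to\sigma(i+1)$ for all $i\in\omega$; ''$\sigma$ is a fullpath starting at $s$'' means additionally $\sigma(0)=s$. $w\to^{+}v$ means there is a finite path $w=v_0\to\cdots\to v_k=v$ with $k\ge1$. Matching: let $\mathit{INC}$ be the set of strictly increasing infinite sequences of natural numbers starting at $0$. For a fullpath $\sigma$ and $\pi\in\mathit{INC}$, the $i$-th segment of $\sigma$ w.r.t. $\pi$ is the finite sequence $\sigma(\pi(i)),\dots,\sigma(\pi(i+1)-1)$. For a relation $B$, fullpaths $\sigma,\delta$ and $\pi,\xi\in\mathit{INC}$, $\mathit{corr}(B,\sigma,\pi,\delta,\xi)$ holds iff for every $i\in\omega$ and every state $s$ in the $i$-th segment of $\sigma$ w.r.t. $\pi$, $sB\delta(\xi(i))$. $\mathit{match}(B,\sigma,\delta)$ holds iff there exist $\pi,\xi\in\mathit{INC}$ with $\mathit{corr}(B,\sigma,\pi,\delta,\xi)$. $B\subseteq S\times S$ is a skipping simulation (SKS) on $\mathcal{M}$ iff for all $s,w$ with $sBw$: (SKS1) $L(s)=L(w)$,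 and (SKS2) for every fullpath $\sigma$ starting at $s$ there is a fullpath $\delta$ starting at $w$ with $\mathit{match}(B,\sigma,\delta)$. $B$ is an RWFSK on $\mathcal{M}$ iff (RWFSK1) for all $s,w$ with $sBw$, $L(s)=L(w)$; and (RWFSK2) there exist a well-founded set $\langle W,\prec\rangle$ and a function $\mathit{rankt}:S\times S\to W$ such that for all $s,u,w\in S$ with $s\to u$ and $sBw$, either (a) $uBw$ and $\mathit{rankt}(u,w)\prec\mathit{rankt}(s,w)$, or (b) there is $v$ with $w\to^{+}v$ and $uBv$. *)

(* Defs.v *)
From Stdlib Require Import Relations Wellfounded.

Record LTS := {
  lts_S : Type;
  lts_step : lts_S -> lts_S -> Prop;
  lts_Lbl : Type;
  lts_L : lts_S -> lts_Lbl;
  lts_nonempty : inhabited lts_S;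
  lts_total : forall s, exists u, lts_step s u
}.

Section Defs.
Variable M : LTS.
Notation St := (lts_S M).
Notation step := (lts_step M).
Notation L := (lts_L M).

Definition fullpath (sigma : nat -> St) : Prop :=
  forall i, step (sigma i) (sigma (S i)).

Definition fullpath_from (sigma : nat -> St) (s : St) : Prop :=
  fullpath sigma /\ sigma 0 = s.

Definition plus_step (w v : St) : Prop := clos_trans St step w v.

Definition INC (pi : nat -> nat) : Prop :=
  pi 0 = 0 /\ forall i, pi i < pi (S i).

Definition corr (B : St -> St -> Prop) (sigma : nat -> St) (pi : nat -> nat)
  (delta : nat -> St) (xi : nat -> nat) : Prop :=
  forall i j, pi i <= j < pi (S i) -> B (sigma j) (delta (xi i)).

Definition match_ (B : St -> St -> Prop) (sigma delta : nat -> St) : Prop :=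
  exists pi xi, INC pi /\ INC xi /\ corr B sigma pi delta xi.

Definition SKS (B : St -> St -> Prop) : Prop :=
  forall s w, B s w ->
    L s = L w /\
    (forall sigma, fullpath_from sigma s ->
       exists delta, fullpath_from delta w /\ match_ B sigma delta).

Definition RWFSK (B : St -> St -> Prop) : Prop :=
  (forall s w, B s w -> L s = L w) /\
  exists (W : Type) (prec : W -> W -> Prop) (rankt : St -> St -> W),
    well_founded prec /\
    forall s u w, step s u -> B s w ->
      (B u w /\ prec (rankt u w) (rankt s w)) \/
      (exists v, plus_step w v /\ B u v).
End Defs.

(* Main.v *)
Require Import Defs.
From Stdlib Require Import Relations Wellfounded Lia Arith Classical ClassicalEpsilon.

Lemma key (M : LTS) (B : lts_S M -> lts_S M -> Prop) (W : Type) (prec : W -> W -> Prop)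
  (rankt : lts_S M -> lts_S M -> W) (wf : well_founded prec)
  (H : forall s u w, lts_step M s u -> B s w ->
      (B u w /\ prec (rankt u w) (rankt s w)) \/ (exists v, plus_step M w v /\ B u v)) :
  forall w sigma, fullpath M sigma -> B (sigma 0) w ->
    exists n v, 0 < n /\ plus_step M w v /\ B (sigma n) v /\ forall j, j < n -> B (sigma j) w.
Proof.
  intros w.
  assert (G : forall r sigma, rankt (sigma 0) w = r -> fullpath M sigma -> B (sigma 0) w ->
    exists n v, 0 < n /\ plus_step M w v /\ B (sigma n) v /\ forall j, j < n -> B (sigma j) w).
  { intros r. induction r as [r IH] using (well_founded_induction wf).
    intros sigma Er Hfp HB.
    destruct (H _ _ _ (Hfp 0) HB) as [[HB1 Hp] | [v [Hv HBv]]].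
    - destruct (IH (rankt (sigma 1) w) ltac:(subst; exact Hp) (fun i => sigma (S i)) eq_refl)
        as [n [v [Hn [Hv [HBv Hj]]]]].
      + intro i; apply Hfp.
      + exact HB1.
      + exists (S n), v. repeat split; try lia; auto.
        intros j Hj'. destruct j; auto. apply Hj. lia.
    - exists 1, v. repeat split; auto. intros j Hj. assert (j = 0) by lia. subst; auto. }
  intros sigma; apply (G _ sigma eq_refl).
Qed.

Lemma plus_fun (M : LTS) (w v : lts_S M) : plus_step M w v ->
  exists k (f : nat -> lts_S M), 0 < k /\ f 0 = w /\ f k = v /\
    forall i, i < k -> lts_step M (f i) (f (S i)).
Proof.
  unfold plus_step. intro Hc. apply clos_trans_t1n in Hc.
  induction Hc as [x y Hxy | x y z Hxy Hyz IH].
  - exists 1, (fun i => match i with 0 => x | _ => y end). repeat split; auto.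
    intros i Hi. assert (i = 0) by lia. subst. exact Hxy.
  - destruct IH as [k [f [Hk [Hf0 [Hfk Hs]]]]].
    exists (S k), (fun i => match i with 0 => x | S i' => f i' end).
    repeat split; try lia; auto.
    intros i Hi. destruct i. rewrite Hf0. exact Hxy. apply Hs. lia.
Qed.

Definition T (M : LTS) := (nat * nat * (nat -> lts_S M))%type.

Definition spec (M : LTS) (B : lts_S M -> lts_S M -> Prop) (sigma : nat -> lts_S M)
  (p : nat) (w : lts_S M) (t : T M) : Prop :=
  let n := fst (fst t) in let k := snd (fst t) in let f := snd t in
  0 < n /\ 0 < k /\ f 0 = w /\ B (sigma (p + n)) (f k) /\
  (forall j, j < n -> B (sigma (p + j)) w) /\
  (forall i, i < k -> lts_step M (f i) (f (S i))).

Fixpoint cfg (M : LTS) (g : nat -> lts_S M -> T M) (w0 : lts_S M) (i : nat) : nat * lts_S M :=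
  match i with
  | 0 => (0, w0)
  | S i' => let c := cfg M g w0 i' in
            let t := g (fst c) (snd c) in
            (fst c + fst (fst t), snd t (snd (fst t)))
  end.

Definition tk (M : LTS) (g : nat -> lts_S M -> T M) (w0 : lts_S M) (i : nat) : T M :=
  g (fst (cfg M g w0 i)) (snd (cfg M g w0 i)).

Definition kk M g w0 i := snd (fst (tk M g w0 i)).

Fixpoint xi (M : LTS) g w0 (i : nat) : nat :=
  match i with 0 => 0 | S i' => xi M g w0 i' + kk M g w0 i' end.

Fixpoint st (M : LTS) g w0 (m : nat) : nat * nat :=
  match m with
  | 0 => (0, 0)
  | S m' => let s := st M g w0 m' in
            if S (snd s) <? kk M g w0 (fst s) then (fst s, S (snd s)) else (S (fst s), 0)
  end.

Definition delta (M : LTS) g w0 (m : nat) : lts_S M :=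
  snd (tk M g w0 (fst (st M g w0 m))) (snd (st M g w0 m)).

Theorem theorem2 (M : LTS) (B : lts_S M -> lts_S M -> Prop) :
  RWFSK M B -> SKS M B.
Proof.
  intros [HL [W [prec [rankt [wf H]]]]] s w Hsw. split; [apply HL; exact Hsw|].
  intros sigma [Hfp H0].
  assert (ex : forall p w', exists t : T M, B (sigma p) w' -> spec M B sigma p w' t).
  { intros p w'. destruct (classic (B (sigma p) w')) as [Hb|Hb].
    - destruct (key M B W prec rankt wf H w' (fun i => sigma (p + i)))
        as [n [v [Hn [Hv [HBv Hj]]]]].
      + intro i. replace (p + S i) with (S (p + i)) by lia. apply Hfp.
      + rewrite Nat.add_0_r. exact Hb.
      + destruct (plus_fun M _ _ Hv) as [k [f [Hk [Hf0 [Hfk Hs]]]]].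
        exists (n, k, f). intros _. unfold spec; simpl. rewrite Hfk.
        repeat split; auto.
    - exists (0, 0, fun _ => w'). intro; contradiction. }
  pose (g := fun p w' => proj1_sig (constructive_indefinite_description _ (ex p w'))).
  assert (Hg : forall p w', B (sigma p) w' -> spec M B sigma p w' (g p w')).
  { intros p w'. unfold g. destruct (constructive_indefinite_description _ (ex p w')); simpl; auto. }
  assert (Inv : forall i, B (sigma (fst (cfg M g w i))) (snd (cfg M g w i))).
  { induction i as [|i IH]; simpl. rewrite H0; exact Hsw.
    destruct (Hg _ _ IH) as [_ [_ [_ [Hb _]]]]. exact Hb. }
  assert (Sp : forall i, spec M B sigma (fst (cfg M g w i)) (snd (cfg M g w i)) (tk M g w i)).
  { intro i. unfold tk. apply Hg, Inv. }
  assert (Kpos : forall i, 0 < kk M g w i).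
  { intro i. destruct (Sp i) as [_ [Hk _]]. exact Hk. }
  assert (Ain : forall i, st M g w (xi M g w i) = (i, 0) ->
            forall o, o < kk M g w i -> st M g w (xi M g w i + o) = (i, o)).
  { intros i Hi o. induction o as [|o IH]; intro Ho.
    - rewrite Nat.add_0_r; exact Hi.
    - replace (xi M g w i + S o) with (S (xi M g w i + o)) by lia. simpl.
      rewrite IH by lia. simpl.
      destruct (Nat.ltb_spec (S o) (kk M g w i)); [reflexivity | lia]. }
  assert (Ast : forall i, st M g w (xi M g w i) = (i, 0)).
  { induction i as [|i IH]; [reflexivity|].
    simpl. pose proof (Kpos i) as Kp.
    replace (xi M g w i + kk M g w i) with (S (xi M g w i + (kk M g w i - 1))) by lia.
    simpl. rewrite (Ain i IH (kk M g w i - 1)) by lia. simpl.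
    destruct (Nat.ltb_spec (S (kk M g w i - 1)) (kk M g w i)); [lia | reflexivity]. }
  assert (Bnd : forall m, snd (st M g w m) < kk M g w (fst (st M g w m))).
  { induction m as [|m IH]; simpl. apply Kpos.
    destruct (Nat.ltb_spec (S (snd (st M g w m))) (kk M g w (fst (st M g w m)))); simpl; auto. }
  exists (delta M g w). split; [split|].
  - intro m. unfold delta. simpl.
    pose proof (Bnd m) as Bm.
    destruct (st M g w m) as [i o]. simpl in *.
    destruct (Sp i) as [_ [_ [Hf0 [_ [_ Hs]]]]].
    destruct (Nat.ltb_spec (S o) (kk M g w i)); simpl.
    + apply Hs. exact Bm.
    + assert (S o = kk M g w i) by lia. unfold kk in *.
      destruct (Sp (S i)) as [_ [_ [Hf0' _]]]. rewrite Hf0'. simpl. fold (tk M g w i). rewrite <- H2. apply Hs. lia.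
  - unfold delta. simpl. destruct (Sp 0) as [_ [_ [Hf0 _]]]. exact Hf0.
  - exists (fun i => fst (cfg M g w i)), (xi M g w).
    split; [split|split; [split|]].
    + reflexivity.
    + intro i. simpl. destruct (Sp i) as [Hn _]. unfold tk in Hn. lia.
    + reflexivity.
    + intro i. simpl. apply Nat.lt_add_pos_r, Kpos.
    + intros i j Hj. simpl in Hj. unfold delta. rewrite Ast. simpl.
      destruct (Sp i) as [Hn [_ [Hf0 [_ [Hjs _]]]]]. rewrite Hf0.
      replace j with (fst (cfg M g w i) + (j - fst (cfg M g w i))) by lia.
      apply Hjs. unfold tk in *. lia.
Qed.
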